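(* There exist a finite action set $\mathcal{A}$, a deterministic environment, a policy $\pi$ and a nonempty target set $\mathcal{N}^g$ with $\pi(n)>0$ for every $n\in\mathcal{N}^g$, such that the generic tree search which at every iteration $k$ selects $n_k\in\arg\max_{n\in\mathcal{F}_k}\pi(n)$ (ties broken arbitrarily) never selects any node of $\mathcal{N}^g$.
   Context: Setting: a finite action set $\mathcal{A}$, a set of states $\mathcal{S}$ with initial state $s_0$, a deterministic transition function $T:\mathcal{S}\times\mathcal{A}\to\mathcal{S}$, and a set of goal states $\mathcal{G}\subseteq\mathcal{S}$. Nodes are finite sequences of actions; the root $n_0$ is the empty sequence; $T(n)$ denotes the state reached from $s_0$ by applying the actions of $n$ in order; the children of $n$ are the sequences $na$, $a\in\mathcal{A}$. The target set is $\mathcal{N}^g=\{n : T(n)\in\mathcal{G}\}$. A policy is a function $\pi$ from nodes to $[0,1]$ with $\pi(n_0)=1$ and $\pi(n)=\sum_{a\in\mathcal{A}}\pi(na)$ for every node $n$. Generic tree search: $\mathcal{V}_1=\emptyset$, $\mathcal{F}_1=\{n_0\}$; at iteration $k\ge 1$ a node $n_k\in\mathcal{F}_k$ is selected; if $n_k\in\mathcal{N}^g$ the search stops with success; otherwise $\mathcal{V}_{k+1}=\mathcal{V}_k\cup\{n_k\}$ and $\mathcal{F}_{k+1}=\bigl(\bigcup_{n\in\mathcal{V}_{k+1}}\{na:a\in\mathcal{A}\}\bigr)\setminus\mathcal{V}_{k+1}$. *)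

(* Defs.v *)
From Stdlib Require Import Reals.
From mathcomp Require Import all_boot.
Set Implicit Arguments. Unset Strict Implicit. Unset Printing Implicit Defensive.

(* Nodes are sequences of actions, [::] is the root n0, child "n a" is rcons n a. *)

Definition reach (A S : Type) (T : S -> A -> S) (s0 : S) (n : seq A) : S :=
  foldl T s0 n.

Definition is_policy (A : finType) (pi : seq A -> R) : Prop :=
  (forall n, Rle R0 (pi n) /\ Rle (pi n) R1) /\ pi [::] = R1 /\
  (forall n, pi n = \big[Rplus/R0]_(a : A) pi (rcons n a)).

(* Selections are indexed from 0: sel k is the node selected at iteration k+1.
   The visited set before iteration k+1 is V = {sel j | j < k}.
   frontier sel k m : m belongs to F_{k+1}; F_1 = {n0}, and otherwise
   F = (children of V) \ V. *)
Definition frontier (A : finType) (sel : nat -> seq A) (k : nat) (m : seq A) : Prop :=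
  if k is 0 then m = [::]
  else (exists j a, (j < k)%N /\ m = rcons (sel j) a) /\
       (forall j, (j < k)%N -> m <> sel j).

Definition greedy_choice (A : finType) (pi : seq A -> R) (sel : nat -> seq A) (j : nat) : Prop :=
  frontier sel j (sel j) /\ (forall m, frontier sel j m -> Rle (pi m) (pi (sel j))).

(* sel 0 .. sel k is a valid execution prefix of the greedy search:
   every choice is greedy, and the search did not stop before iteration k+1
   (no previously selected node is a target). *)
Definition greedy_run (A : finType) (S : Type) (T : S -> A -> S) (s0 : S) (G : S -> Prop)
  (pi : seq A -> R) (sel : nat -> seq A) (k : nat) : Prop :=
  (forall j, (j <= k)%N -> greedy_choice pi sel j) /\
  (forall j, (j < k)%N -> ~ G (reach T s0 (sel j))).

(* Main.v *)
Require Import Defs.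
From Stdlib Require Import Reals Lra.
From mathcomp Require Import all_boot.

Lemma sum_bool (f : bool -> R) : \big[Rplus/R0]_(a : bool) f a = Rplus (f true) (Rplus (f false) R0).
Proof. rewrite unlock /index_enum /=. rewrite !unlock /=. reflexivity. Qed.

Local Open Scope R_scope.
Definition piB (n : seq bool) : R :=
  if all (pred1 true) n then Rplus (Rinv 2) (pow (Rinv 2) (S (size n))) else pow (Rinv 2) (S (size n)).

Local Close Scope R_scope.
Lemma reach_id (n : seq bool) : reach (fun s a => rcons s a) [::] n = n.
Proof.
rewrite /reach. suff H : forall s, foldl (fun s a => rcons s a) s n = s ++ n by rewrite H.
elim: n => [|a n IH] s /=; first by rewrite cats0.
by rewrite IH cat_rcons.
Qed.

Lemma pow_half_bounds m : Rlt 0 (pow (Rinv 2) m) /\ Rle (pow (Rinv 2) m) 1.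
Proof.
elim: m => [|m [IH1 IH2]] /=; lra.
Qed.

Lemma all_rcons_true n a : all (pred1 true) (rcons n a) = all (pred1 true) n && (a == true).
Proof. by rewrite all_rcons andbC. Qed.

Lemma piB_bounds (n : seq bool) : Rle R0 (piB n) /\ Rle (piB n) R1.
Proof.
rewrite /piB; have [h1 h2] := pow_half_bounds (size n).
case: (all _ _) => /=; split.
all: change R0 with (IZR 0); change R1 with (IZR 1); lra.
Qed.

Lemma piB_sum (n : seq bool) :
  piB n = Rplus (piB (rcons n true)) (Rplus (piB (rcons n false)) R0).
Proof.
rewrite /piB !all_rcons_true !size_rcons /=.
case: (all _ _) => /=; change R0 with (IZR 0); lra.
Qed.

Lemma piB_policy : is_policy piB.
Proof.
split; [|split].
- move=> n; exact: piB_bounds.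
- rewrite /piB /=; change R1 with (IZR 1); lra.
- move=> n; rewrite sum_bool; exact: piB_sum.
Qed.

Lemma piB_pos n : Rlt 0 (piB n).
Proof.
rewrite /piB; have [h1 h2] := pow_half_bounds (size n).
case: (all _ _) => /=; lra.
Qed.

Lemma piB_sep (m n : seq bool) : all (pred1 true) m -> ~~ all (pred1 true) n ->
  ~ Rle (piB m) (piB n).
Proof.
move=> Hm Hn; rewrite /piB Hm (negbTE Hn).
have [h1 h2] := pow_half_bounds (size m).
have [h3 h4] := pow_half_bounds (size n).
simpl; change R1 with (IZR 1); lra.
Qed.

Theorem theorem1 :
  exists (A : finType) (S : Type) (s0 : S) (T : S -> A -> S) (G : S -> Prop) (pi : seq A -> R),
    is_policy pi /\
    (exists n : seq A, G (reach T s0 n)) /\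
    (forall n : seq A, G (reach T s0 n) -> Rlt R0 (pi n)) /\
    (forall (sel : nat -> seq A) (k : nat),
        greedy_run T s0 G pi sel k -> ~ G (reach T s0 (sel k))).
Proof.
exists bool, (seq bool), [::], (fun s a => rcons s a), (fun s => s = [:: false]), piB.
split; first exact: piB_policy.
split; first by exists [:: false]; rewrite reach_id.
split; first by move=> n _; apply: piB_pos.
move=> sel k [Hg _]; rewrite reach_id.
suff Hs : forall j, (j <= k)%N -> sel j = nseq j true.
  by rewrite (Hs k (leqnn k)); case: k {Hs Hg} => [|[|k]].
elim/ltn_ind => j IH Hjk.
have [Hf Hmax] := Hg j Hjk.
case: j IH Hjk Hf Hmax => [|j] IH Hjk Hf Hmax; first by [].
have IHj : forall i, (i < j.+1)%N -> sel i = nseq i true.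
  by move=> i Hi; apply: IH => //; apply: leq_trans (ltnW Hi) Hjk.
have Hfr : frontier sel j.+1 (nseq j.+1 true).
  split.
  - exists j, true; split => //; rewrite IHj // -cats1 /=.
    by elim: j {IH IHj Hjk Hf Hmax} => //= j ->.
  - move=> i Hi E; move: E; rewrite IHj // => /(congr1 size); rewrite !size_nseq.
    by move=> E; rewrite E ltnn in Hi.
have Hle := Hmax _ Hfr.
have Hall : all (pred1 true) (sel j.+1).
  apply/negPn/negP => Hn.
  have Hm : all (pred1 true) (nseq j.+1 true) by apply/all_pred1P; rewrite size_nseq.
  exact: (@piB_sep (nseq j.+1 true) (sel j.+1) Hm Hn Hle).
move/all_pred1P: Hall => Hsel.
case: Hf => [[i [a [Hi E]]] Hne].
have Hsz : size (sel j.+1) = i.+1 by rewrite E size_rcons IHj // size_nseq.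
rewrite Hsel Hsz; congr nseq.
apply/eqP; rewrite eqn_leq Hi /=.
rewrite ltnNge; apply/negP => Hlt.
apply: (Hne i.+1 Hlt).
by rewrite Hsel Hsz IHj.
Qed.
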